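(* Let $\mathbf a=\{a_j\}_{j\ge1}$ and $\mathbf b=\{b_j\}_{j\ge1}$ be positive sequences satisfying $0<a_1\le a_2\le\cdots$ and $\inf_j b_j>0$, and fix $\omega\in(0,1)$. Then for all $\varepsilon\in(0,1)$ and $d\in\mathbb N$, $$n(\varepsilon,\mathrm{APP}_d)=n\Big(\Big(\frac{\ln\varepsilon^{-2}}{\ln\omega^{-1}}+1\Big)^{-1/2},I_d\Big)\quad\text{and}\quad n(\varepsilon,I_d)=n\big(\omega^{(\varepsilon^{-2}-1)/2},\mathrm{APP}_d\big).$$
   Context: For $f\in L_2([0,1]^d)$, $\hat f(\mathbf k)=\int_{[0,1]^d}f(\mathbf x)e^{-2\pi i\mathbf k\cdot\mathbf x}d\mathbf x$. $W_2^{\mathbf a,\mathbf b}([0,1]^d)$ is the Hilbert space of $f\in L_2([0,1]^d)$ with norm $\|f\|^2=\sum_{\mathbf k\in\mathbb Z^d}(1+\sum_{j=1}^d a_j|k_j|^{2b_j})|\hat f(\mathbf k)|^2<\infty$, and $I_d:W_2^{\mathbf a,\mathbf b}([0,1]^d)\to L_2([0,1]^d)$ is the identity embedding. With $\omega_{\mathbf k}=\omega^{\sum_{j=1}^d a_j|k_j|^{2b_j}}$, the analytic Korobov space $H(K_{d,\mathbf a,2\mathbf b})$ is the reproducing kernel Hilbert space with kernel $K(\mathbf x,\mathbf y)=\sum_{\mathbf k\in\mathbb Z^d}\omega_{\mathbf k}e^{2\pi i\mathbf k\cdot(\mathbf x-\mathbf y)}$, i.e. functions with norm $\|f\|^2=\sum_{\mathbf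 k}|\hat f(\mathbf k)|^2\omega_{\mathbf k}^{-1}<\infty$; $\mathrm{APP}_d:H(K_{d,\mathbf a,2\mathbf b})\to L_2([0,1]^d)$, $\mathrm{APP}_d f=f$. Approximation numbers: $a_n(T)=\inf\{\|T-A\|:\mathrm{rank}\,A<n\}$. For $S_d\in\{I_d,\mathrm{APP}_d\}$ the information complexity (minimal number of continuous linear functionals needed for worst-case error $\le\varepsilon$ on the unit ball) is $n(\varepsilon,S_d)=\min\{n\ge0: a_{n+1}(S_d)\le\varepsilon\}$. *)

(* Defs.v *)
From Stdlib Require Import Reals Lra List ZArith.
Open Scope R_scope.

Definition Cx := (R * R)%type.
Definition Cadd (z w : Cx) : Cx := (fst z + fst w, snd z + snd w).
Definition Csub (z w : Cx) : Cx := (fst z - fst w, snd z - snd w).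
Definition Cmul (z w : Cx) : Cx :=
  (fst z * fst w - snd z * snd w, fst z * snd w + snd z * fst w).
Definition C0 : Cx := (0, 0).
Definition Cnorm2 (z : Cx) : R := fst z ^ 2 + snd z ^ 2.

(* A multi-index k = (k_1,...,k_d) is a list of integers of length d.
   A function on [0,1]^d is represented by its Fourier coefficients
   fhat : Z^d -> C (Parseval: L_2([0,1]^d) is unitarily identified with l_2(Z^d));
   values at lists of length <> d are irrelevant and ignored everywhere. *)
Definition Idx := list Z.
Definition Seq := Idx -> Cx.

Definition Sadd (f g : Seq) : Seq := fun k => Cadd (f k) (g k).
Definition Ssub (f g : Seq) : Seq := fun k => Csub (f k) (g k).
Definition Sscale (z : Cx) (f : Seq) : Seq := fun k => Cmul z (f k).
Definition eqd (d : nat) (f g : Seq) : Prop := forall k, length k = d -> f k = g k.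

(* |x|^y with the convention 0^y = 0 (used with y = 2 b_j > 0) *)
Definition rpow (x y : R) : R := if Req_EM_T x 0 then 0 else Rpower x y.

Fixpoint wsum (a b : nat -> R) (j : nat) (k : Idx) : R :=
  match k with
  | nil => 0
  | kj :: k' => a j * rpow (IZR (Z.abs kj)) (2 * b j) + wsum a b (S j) k'
  end.
Definition weight (a b : nat -> R) (k : Idx) : R := wsum a b 1 k.

Definition finset (d : nat) (F : list Idx) : Prop :=
  NoDup F /\ Forall (fun k => length k = d) F.
Definition fsum (F : list Idx) (g : Idx -> R) : R :=
  fold_right (fun k s => g k + s) 0 F.
Definition sum_le (d : nat) (g : Idx -> R) (M : R) : Prop :=
  forall F, finset d F -> fsum F g <= M.

Definition wnorm2_le (d : nat) (rho : Idx -> R) (f : Seq) (M : R) : Prop :=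
  sum_le d (fun k => rho k * Cnorm2 (f k)) M.
Definition inspace (d : nat) (rho : Idx -> R) (f : Seq) : Prop :=
  exists M, wnorm2_le d rho f M.

Definition rho_L2 : Idx -> R := fun _ => 1.
Definition rho_W (a b : nat -> R) : Idx -> R := fun k => 1 + weight a b k.
Definition omega_k (omega : R) (a b : nat -> R) (k : Idx) : R :=
  Rpower omega (weight a b k).
Definition rho_H (omega : R) (a b : nat -> R) : Idx -> R :=
  fun k => / omega_k omega a b k.

Definition linear_on (d : nat) (rho : Idx -> R) (A : Seq -> Seq) : Prop :=
  forall (f g : Seq) (z : Cx), inspace d rho f -> inspace d rho g ->
    eqd d (A (Sadd (Sscale z f) g)) (Sadd (Sscale z (A f)) (A g)).

Fixpoint lincomb (cs : list Cx) (vs : list Seq) : Seq :=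
  match cs, vs with
  | c :: cs', v :: vs' => Sadd (Sscale c v) (lincomb cs' vs')
  | _, _ => fun _ => C0
  end.

Definition rank_lt (d : nat) (rho : Idx -> R) (A : Seq -> Seq) (n : nat) : Prop :=
  exists vs : list Seq, (length vs < n)%nat /\ Forall (inspace d rho_L2) vs /\
    forall f, inspace d rho f ->
      exists cs : list Cx, length cs = length vs /\ eqd d (A f) (lincomb cs vs).

(* ||S - A|| <= c, where S is the identity embedding (on Fourier coefficients):
   ||f - A f||_{L_2}^2 <= c^2 ||f||_rho^2 for all f in the domain *)
Definition opnorm_diff_le (d : nat) (rho : Idx -> R) (A : Seq -> Seq) (c : R) : Prop :=
  forall f M, wnorm2_le d rho f M -> wnorm2_le d rho_L2 (Ssub f (A f)) (c ^ 2 * M).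

(* a_n(S) <= eps, where a_n(S) = inf { ||S - A|| : A linear, rank A < n } *)
Definition approx_num_le (d : nat) (rho : Idx -> R) (n : nat) (eps : R) : Prop :=
  forall delta, delta > 0 ->
    exists A, linear_on d rho A /\ rank_lt d rho A n /\ opnorm_diff_le d rho A (eps + delta).

(* is_ncomp d rho eps m : m = n(eps, S) = min { n >= 0 : a_{n+1}(S) <= eps },
   S the identity embedding of the rho-weighted space into L_2([0,1]^d). *)
Definition is_ncomp (d : nat) (rho : Idx -> R) (eps : R) (m : nat) : Prop :=
  approx_num_le d rho (S m) eps /\
  forall n, approx_num_le d rho (S n) eps -> (m <= n)%nat.

(* Main.v *)
Require Import Defs.
From Stdlib Require Import Reals Lra Lia List ZArith Classical.
Open Scope R_scope.

Definition idx_eq_dec := list_eq_dec Z.eq_dec.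

Lemma fsum_cons a l g : fsum (a :: l) g = g a + fsum l g.
Proof. reflexivity. Qed.

Lemma fsum_ext K g h : (forall k, In k K -> g k = h k) -> fsum K g = fsum K h.
Proof. induction K; simpl; intros H; auto. rewrite H by auto. rewrite IHK; auto. Qed.

Lemma fsum_plus K g h : fsum K (fun k => g k + h k) = fsum K g + fsum K h.
Proof. induction K; simpl; [lra|]. rewrite IHK; lra. Qed.

Lemma fsum_minus K g h : fsum K (fun k => g k - h k) = fsum K g - fsum K h.
Proof. induction K; simpl; [lra|]. rewrite IHK; lra. Qed.

Lemma fsum_scal K c g : fsum K (fun k => c * g k) = c * fsum K g.
Proof. induction K; simpl; [lra|]. rewrite IHK; lra. Qed.

Lemma fsum_le K g h : (forall k, In k K -> g k <= h k) -> fsum K g <= fsum K h.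
Proof. induction K; simpl; intros H; [lra|].
  assert (g a <= h a) by auto. assert (fsum K g <= fsum K h) by (apply IHK; auto). lra. Qed.

Lemma fsum_zero K g : (forall k, In k K -> g k = 0) -> fsum K g = 0.
Proof. induction K; simpl; intros H; auto. rewrite H by auto. rewrite IHK; auto. lra. Qed.

Lemma fsum_nonneg K g : (forall k, In k K -> 0 <= g k) -> 0 <= fsum K g.
Proof. induction K; simpl; intros H; [lra|].
  assert (0 <= g a) by auto. assert (0 <= fsum K g) by (apply IHK; auto). lra. Qed.

Lemma fsum_drop1 F h k0 : NoDup F -> 0 <= h k0 ->
  fsum F h <= fsum F (fun k => if idx_eq_dec k k0 then 0 else h k) + h k0.
Proof.
  induction F as [|k1 F IH]; intros Hnd H0; simpl; [lra|].
  inversion Hnd; subst.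
  destruct (idx_eq_dec k1 k0) as [->|Hne].
  - rewrite (fsum_ext F h (fun k => if idx_eq_dec k k0 then 0 else h k)); [lra|].
    intros k Hk. destruct (idx_eq_dec k k0) as [->|]; [contradiction|reflexivity].
  - specialize (IH H3 H0). lra.
Qed.

Lemma fsum_sub K : NoDup K -> forall F h, NoDup F -> (forall k, 0 <= h k) ->
  (forall k, ~ In k K -> h k = 0) -> fsum F h <= fsum K h.
Proof.
  induction K as [|k0 K IH]; intros HK F h HF Hh Hz.
  - simpl. rewrite fsum_zero; [lra|]. intros k _. apply Hz. simpl; tauto.
  - inversion HK; subst.
    pose proof (fsum_drop1 F h k0 HF (Hh k0)) as E.
    assert (E2 : fsum F (fun k => if idx_eq_dec k k0 then 0 else h k) <=
                 fsum K (fun k => if idx_eq_dec k k0 then 0 else h k)).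
    { apply IH; auto.
      - intros k. destruct (idx_eq_dec k k0); [lra|auto].
      - intros k Hk. destruct (idx_eq_dec k k0); [reflexivity|]. apply Hz.
        simpl. intros [->|Hc]; [congruence|contradiction]. }
    rewrite (fsum_ext K _ h) in E2.
    + simpl. lra.
    + intros k Hk. destruct (idx_eq_dec k k0) as [->|]; [contradiction|reflexivity].
Qed.

Definition lin_local (N : nat) (phi : (nat -> R) -> R) : Prop :=
  (forall x y a b, phi (fun j => a * x j + b * y j) = a * phi x + b * phi y) /\
  (forall x y, (forall j, (j < N)%nat -> x j = y j) -> phi x = phi y).

Lemma kernel : forall N (phis : list ((nat -> R) -> R)),
  (length phis < N)%nat -> Forall (lin_local N) phis ->
  exists x, (exists j, (j < N)%nat /\ x j <> 0) /\ Forall (fun phi => phi x = 0) phis.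
Proof.
  induction N as [|N IH]; intros phis Hlen Hlin; [lia|].
  set (e := fun j => if Nat.eqb j N then 1 else 0).
  rewrite Forall_forall in Hlin.
  destruct (classic (exists phi, In phi phis /\ phi e <> 0)) as [[phi0 [Hin0 Hne0]] | Hno].
  2: { exists e. split.
       - exists N. split; [lia|]. unfold e. rewrite Nat.eqb_refl. lra.
       - apply Forall_forall. intros phi Hin. apply NNPP. intro Hc. apply Hno. eauto. }
  destruct (in_split _ _ Hin0) as [l1 [l2 Heq]].
  set (restr := fun (x : nat -> R) j => if Nat.ltb j N then x j else 0).
  set (T := fun (phi : (nat -> R) -> R) (x : nat -> R) =>
              phi (restr x) - (phi e / phi0 e) * phi0 (restr x)).
  assert (Hr : forall psi, lin_local (S N) psi -> forall x y a b,
     psi (restr (fun j => a * x j + b * y j)) = a * psi (restr x) + b * psi (restr y)).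
  { intros psi [Hpl Hploc] x y a b. rewrite <- Hpl. apply Hploc. intros j _.
    unfold restr. cbv beta. destruct (Nat.ltb j N); ring. }
  assert (HT : forall phi, In phi phis -> lin_local N (T phi)).
  { intros phi Hin. split.
    - intros x y a b. unfold T. cbv beta.
      rewrite (Hr phi (Hlin phi Hin) x y a b), (Hr phi0 (Hlin phi0 Hin0) x y a b). ring.
    - intros x y Hxy. unfold T.
      assert (E: forall psi, lin_local (S N) psi -> psi (restr x) = psi (restr y)).
      { intros psi [_ Hploc]. apply Hploc. intros j _. unfold restr.
        destruct (Nat.ltb j N) eqn:E; auto. apply Hxy. apply Nat.ltb_lt; auto. }
      rewrite (E phi (Hlin phi Hin)), (E phi0 (Hlin phi0 Hin0)). reflexivity. }
  destruct (IH (map T (l1 ++ l2))) as [y [[j [Hj Hyj]] Hy]].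
  { rewrite length_map. rewrite Heq in Hlen. rewrite length_app in *. simpl in Hlen. lia. }
  { apply Forall_forall. intros psi Hpsi. apply in_map_iff in Hpsi.
    destruct Hpsi as [phi [<- Hphi]]. apply HT. rewrite Heq.
    apply in_app_or in Hphi. apply in_or_app. simpl. tauto. }
  rewrite Forall_forall in Hy.
  set (t := - phi0 (restr y) / phi0 e).
  exists (fun j => 1 * restr y j + t * e j). split.
  - exists j. split; [lia|]. unfold restr, e.
    rewrite (proj2 (Nat.ltb_lt j N) Hj). rewrite (proj2 (Nat.eqb_neq j N)) by lia.
    rewrite Rmult_0_r, Rplus_0_r, Rmult_1_l. exact Hyj.
  - apply Forall_forall. intros phi Hin. destruct (Hlin phi Hin) as [Hl _].
    rewrite (Hl (restr y) e 1 t).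
    assert (Hin' := Hin). rewrite Heq in Hin'. apply in_app_or in Hin'.
    destruct Hin' as [Hin'|[Hin'|Hin']].
    + assert (H0 : T phi y = 0). { apply Hy. apply in_map. apply in_or_app. auto. }
      unfold T in H0. assert (1 * phi (restr y) + t * phi e = phi (restr y) - phi e / phi0 e * phi0 (restr y))
        by (unfold t; field; exact Hne0). lra.
    + rewrite <- Hin'. unfold t. field. exact Hne0.
    + assert (H0 : T phi y = 0). { apply Hy. apply in_map. apply in_or_app. auto. }
      unfold T in H0. assert (1 * phi (restr y) + t * phi e = phi (restr y) - phi e / phi0 e * phi0 (restr y))
        by (unfold t; field; exact Hne0). lra.
Qed.
Fixpoint build (K : list Idx) (z : nat -> R) (k : Idx) {struct K} : Cx :=
  match K with
  | nil => C0
  | k0 :: K' => if idx_eq_dec k k0 then (z 0%nat, z 1%nat)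
                else build K' (fun j => z (S (S j))) k
  end.

Lemma build_out K z k : ~ In k K -> build K z k = C0.
Proof. revert z; induction K as [|k0 K IH]; intros z H; simpl; auto.
  destruct (idx_eq_dec k k0) as [->|Hne]. exfalso; apply H; simpl; auto.
  apply IH. intro; apply H; simpl; auto. Qed.

Lemma build_lin K x y a b k : build K (fun j => a * x j + b * y j) k =
  (a * fst (build K x k) + b * fst (build K y k), a * snd (build K x k) + b * snd (build K y k)).
Proof. revert x y; induction K as [|k0 K IH]; intros x y; simpl.
 - unfold C0; simpl; f_equal; ring.
 - destruct (idx_eq_dec k k0); simpl; auto.
Qed.

Lemma build_local K x y k : (forall j, (j < 2 * length K)%nat -> x j = y j) ->
  build K x k = build K y k.
Proof. revert x y; induction K as [|k0 K IH]; intros x y H; simpl; auto.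
  destruct (idx_eq_dec k k0).
  - rewrite (H 0%nat), (H 1%nat) by (simpl; lia). reflexivity.
  - apply IH. intros j Hj. apply H. simpl. lia. Qed.

Lemma fsum_build k0 K (G : Idx -> Cx -> R) z : NoDup (k0 :: K) ->
  fsum (k0 :: K) (fun k => G k (build (k0 :: K) z k)) =
  G k0 (z 0%nat, z 1%nat) + fsum K (fun k => G k (build K (fun j => z (S (S j))) k)).
Proof.
  intros Hnd. rewrite fsum_cons. f_equal.
  - simpl. destruct (idx_eq_dec k0 k0); congruence.
  - apply fsum_ext. intros k Hk. simpl. destruct (idx_eq_dec k k0) as [->|].
    + inversion Hnd; contradiction.
    + reflexivity.
Qed.

Lemma sq_pos x : x <> 0 -> 0 < x ^ 2.
Proof. intros H. simpl. rewrite Rmult_1_r. exact (Rsqr_pos_lt x H). Qed.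

Lemma Cnorm2_nonneg c : 0 <= Cnorm2 c.
Proof. unfold Cnorm2. pose proof (pow2_ge_0 (fst c)). pose proof (pow2_ge_0 (snd c)). lra. Qed.

Lemma build_pos K : NoDup K -> forall (w : Idx -> R) z, (forall k, In k K -> 0 < w k) ->
  (exists j, (j < 2 * length K)%nat /\ z j <> 0) ->
  0 < fsum K (fun k => w k * Cnorm2 (build K z k)).
Proof.
  induction K as [|k0 K IH]; intros Hnd w z Hw [j [Hj Hz]]; simpl in Hj; [lia|].
  pose proof (fsum_build k0 K (fun k c => w k * Cnorm2 c) z Hnd) as E. cbv beta in E.
  rewrite E. inversion Hnd; subst.
  assert (Hw0 : 0 < w k0) by (apply Hw; simpl; auto).
  assert (Hr : 0 <= fsum K (fun k => w k * Cnorm2 (build K (fun j => z (S (S j))) k))).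
  { apply fsum_nonneg. intros k Hk. apply Rmult_le_pos; [left; apply Hw; simpl; auto|apply Cnorm2_nonneg]. }
  destruct (lt_dec j 2) as [Hj2|Hj2].
  - assert (0 < Cnorm2 (z 0%nat, z 1%nat)).
    { unfold Cnorm2; simpl fst; simpl snd.
      destruct j as [|[|j]]; [| |lia].
      + pose proof (sq_pos _ Hz). pose proof (pow2_ge_0 (z 1%nat)). lra.
      + pose proof (sq_pos _ Hz). pose proof (pow2_ge_0 (z 0%nat)). lra. }
    assert (0 < w k0 * Cnorm2 (z 0%nat, z 1%nat)) by (apply Rmult_lt_0_compat; auto).
    lra.
  - assert (0 < fsum K (fun k => w k * Cnorm2 (build K (fun j => z (S (S j))) k))).
    { apply IH; auto. intros k Hk; apply Hw; simpl; auto.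
      exists (j - 2)%nat. split; [lia|]. replace (S (S (j - 2))) with j by lia. exact Hz. }
    assert (0 <= w k0 * Cnorm2 (z 0%nat, z 1%nat)) by (apply Rmult_le_pos; [lra|apply Cnorm2_nonneg]).
    lra.
Qed.

Definition inner (K : list Idx) (f v : Seq) : R :=
  fsum K (fun k => fst (f k) * fst (v k) + snd (f k) * snd (v k)).
Definition inner2 (K : list Idx) (f v : Seq) : R :=
  fsum K (fun k => snd (f k) * fst (v k) - fst (f k) * snd (v k)).

Lemma inner_lincomb K f vs : (forall v, In v vs -> inner K f v = 0 /\ inner2 K f v = 0) ->
  forall cs, inner K f (lincomb cs vs) = 0.
Proof.
  induction vs as [|v vs IH]; intros H cs.
  - destruct cs; unfold inner; apply fsum_zero; intros; simpl; unfold C0; simpl; ring.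
  - destruct cs as [|c cs].
    + unfold inner; apply fsum_zero; intros; simpl; unfold C0; simpl; ring.
    + cbn [lincomb]. destruct (H v (or_introl eq_refl)) as [H1 H2].
      assert (E: inner K f (Sadd (Sscale c v) (lincomb cs vs)) =
                 fst c * inner K f v + snd c * inner2 K f v + inner K f (lincomb cs vs)).
      { unfold inner, inner2. rewrite <- fsum_scal, <- fsum_scal, <- !fsum_plus.
        apply fsum_ext. intros k _. unfold Sadd, Sscale, Cadd, Cmul. simpl. ring. }
      rewrite E, H1, H2, IH; [ring|]. intros; apply H; simpl; auto.
Qed.

Lemma delta_one eps r : 0 < eps -> 0 < r -> eps ^ 2 * r < 1 ->
  exists d0, 0 < d0 /\ forall dl, 0 < dl <= d0 -> (eps + dl) ^ 2 * r < 1.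
Proof.
  intros He Hr H.
  assert (HD : 0 < (2*eps+1)*r + 1) by nra.
  set (q := (1 - eps^2 * r) / ((2*eps+1)*r + 1)).
  assert (Hq : 0 < q) by (unfold q; apply Rdiv_lt_0_compat; lra).
  assert (Hqd : q * ((2*eps+1)*r + 1) = 1 - eps^2 * r) by (unfold q; field; lra).
  exists (Rmin 1 q). split. apply Rmin_glb_lt; lra.
  intros dl [H1 H2].
  assert (dl <= 1) by (eapply Rle_trans; [exact H2| apply Rmin_l]).
  assert (dl <= q) by (eapply Rle_trans; [exact H2| apply Rmin_r]).
  assert (dl * ((2*eps+1)*r + 1) <= q * ((2*eps+1)*r + 1)) by (apply Rmult_le_compat_r; lra).
  assert (dl * dl <= dl * 1) by (apply Rmult_le_compat_l; lra).
  assert (dl * dl * r <= dl * 1 * r) by (apply Rmult_le_compat_r; lra).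
  nra.
Qed.

Lemma delta_exists eps (rho : Idx -> R) K : 0 < eps ->
  (forall k, In k K -> 0 < rho k /\ eps ^ 2 * rho k < 1) ->
  exists d0, 0 < d0 /\ forall dl, 0 < dl <= d0 -> forall k, In k K -> (eps + dl) ^ 2 * rho k < 1.
Proof.
  intros He. induction K as [|k0 K IH]; intros H.
  - exists 1. split; [lra|]. intros _ _ k [].
  - destruct IH as [d1 [Hd1 H1]]. intros k Hk; apply H; simpl; auto.
    destruct (H k0 (or_introl eq_refl)) as [Hr Hlt].
    destruct (delta_one eps (rho k0) He Hr Hlt) as [d2 [Hd2 H2]].
    exists (Rmin d1 d2). split. apply Rmin_glb_lt; lra.
    intros dl [Hdl1 Hdl2] k [<-|Hk].
    + apply H2. split; auto. eapply Rle_trans; [exact Hdl2|apply Rmin_r].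
    + apply H1; auto. split; auto. eapply Rle_trans; [exact Hdl2|apply Rmin_l].
Qed.
Lemma length_fm2 (A B : Type) (p q : A -> B) (vs : list A) :
  length (flat_map (fun v => p v :: q v :: nil) vs) = (2 * length vs)%nat.
Proof. induction vs; simpl; auto. rewrite IHvs. lia. Qed.

Lemma lower d rho eps n K : (forall k, 0 < rho k) -> 0 < eps -> NoDup K ->
  (forall k, In k K -> length k = d /\ rho k < / eps ^ 2) -> length K = S n ->
  ~ approx_num_le d rho (S n) eps.
Proof.
  intros Hrho Heps Hnd HK HlenK Happ.
  destruct (delta_exists eps rho K Heps) as [delta [Hd Hdk]].
  { intros k Hk. split; [apply Hrho|]. destruct (HK k Hk) as [_ H].
    assert (0 < eps ^ 2) by (apply pow_lt; auto).
    apply (Rmult_lt_compat_l (eps ^ 2)) in H; auto. rewrite Rinv_r in H; lra. }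
  destruct (Happ delta Hd) as [A [_ [[vs [Hvs [_ Hrep]]] Hop]]].
  set (phis := flat_map (fun v => (fun z => inner K (build K z) v) ::
                                  (fun z => inner2 K (build K z) v) :: nil) vs).
  destruct (kernel (2 * length K) phis) as [z [Hz Hphis]].
  { unfold phis. rewrite length_fm2. lia. }
  { apply Forall_forall. intros phi Hin. unfold phis in Hin. apply in_flat_map in Hin.
    destruct Hin as [v [_ Hin]]. simpl in Hin. destruct Hin as [<-|[<-|[]]]; split.
    - intros x y a b. unfold inner. rewrite <- !fsum_scal, <- fsum_plus.
      apply fsum_ext; intros k _. cbv beta. rewrite build_lin. simpl. ring.
    - intros x y Hxy. unfold inner. apply fsum_ext. intros k _.
      rewrite (build_local K x y k Hxy). reflexivity.
    - intros x y a b. unfold inner2. rewrite <- !fsum_scal, <- fsum_plus.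
      apply fsum_ext; intros k _. cbv beta. rewrite build_lin. simpl. ring.
    - intros x y Hxy. unfold inner2. apply fsum_ext. intros k _.
      rewrite (build_local K x y k Hxy). reflexivity. }
  set (f := build K z).
  assert (Horth : forall v, In v vs -> inner K f v = 0 /\ inner2 K f v = 0).
  { rewrite Forall_forall in Hphis. intros v Hv. split.
    - apply (Hphis (fun z => inner K (build K z) v)). unfold phis. apply in_flat_map.
      exists v. simpl; auto.
    - apply (Hphis (fun z => inner2 K (build K z) v)). unfold phis. apply in_flat_map.
      exists v. simpl; auto. }
  set (M := fsum K (fun k => rho k * Cnorm2 (f k))).
  assert (HM : wnorm2_le d rho f M).
  { intros F [HF _]. apply fsum_sub; auto.
    - intros k. apply Rmult_le_pos; [left; apply Hrho|apply Cnorm2_nonneg].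
    - intros k Hk. unfold f. rewrite build_out by auto. unfold Cnorm2, C0; simpl; ring. }
  destruct (Hrep f (ex_intro _ M HM)) as [cs [_ Hcs]].
  assert (HKf : finset d K).
  { split; auto. apply Forall_forall. intros k Hk; apply HK; auto. }
  specialize (Hop f M HM K HKf).
  assert (Hin0 : inner K f (A f) = 0).
  { rewrite <- (inner_lincomb K f vs Horth cs). unfold inner. apply fsum_ext.
    intros k Hk. rewrite (Hcs k (proj1 (HK k Hk))). reflexivity. }
  assert (Hlow : fsum K (fun k => Cnorm2 (f k)) - 2 * inner K f (A f) <=
                 fsum K (fun k => rho_L2 k * Cnorm2 (Ssub f (A f) k))).
  { unfold inner. rewrite <- fsum_scal, <- fsum_minus. apply fsum_le. intros k _.
    cbv beta. unfold rho_L2, Ssub, Csub, Cnorm2. simpl.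
    pose proof (pow2_ge_0 (fst (A f k))). pose proof (pow2_ge_0 (snd (A f k))). nra. }
  assert (Hpos : 0 < fsum K (fun k => (1 - (eps + delta) ^ 2 * rho k) * Cnorm2 (build K z k))).
  { apply build_pos; [exact Hnd| |exact Hz].
    intros k Hk. pose proof (Hdk delta (conj Hd (Rle_refl _)) k Hk). lra. }
  assert (Eq : fsum K (fun k => (1 - (eps + delta) ^ 2 * rho k) * Cnorm2 (build K z k)) =
               fsum K (fun k => Cnorm2 (f k)) - (eps + delta) ^ 2 * M).
  { unfold M. rewrite <- fsum_scal, <- fsum_minus. apply fsum_ext. intros k _. unfold f. ring. }
  lra.
Qed.

Definition proj (F0 : list Idx) (f : Seq) : Seq :=
  fun k => if in_dec idx_eq_dec k F0 then f k else C0.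
Definition unitv (k0 : Idx) : Seq := fun k => if idx_eq_dec k k0 then (1, 0) else C0.

Lemma lincomb_unit F0 f k : NoDup F0 -> lincomb (map f F0) (map unitv F0) k = proj F0 f k.
Proof.
  induction F0 as [|k0 F0 IH]; intros Hnd.
  - reflexivity.
  - inversion Hnd; subst. cbn [map lincomb]. unfold Sadd, Sscale. rewrite IH by auto.
    unfold proj, unitv.
    destruct (idx_eq_dec k k0) as [->|Hne].
    + destruct (in_dec idx_eq_dec k0 F0); [contradiction|].
      destruct (in_dec idx_eq_dec k0 (k0 :: F0)) as [_|Hc]; [| exfalso; apply Hc; simpl; auto].
      destruct (f k0); unfold Cadd, Cmul, C0; simpl; f_equal; ring.
    + destruct (in_dec idx_eq_dec k (k0 :: F0)) as [Hin|Hnin];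
      destruct (in_dec idx_eq_dec k F0) as [Hin'|Hnin'].
      * destruct (f k0), (f k); unfold Cadd, Cmul, C0; simpl; f_equal; ring.
      * exfalso. destruct Hin; [congruence|contradiction].
      * exfalso. apply Hnin. simpl; auto.
      * destruct (f k0); unfold Cadd, Cmul, C0; simpl; f_equal; ring.
Qed.

Lemma upper d rho eps n F0 : (forall k, 0 < rho k) -> 0 < eps -> finset d F0 ->
  (length F0 <= n)%nat ->
  (forall k, length k = d -> rho k < / eps ^ 2 -> In k F0) -> approx_num_le d rho (S n) eps.
Proof.
  intros Hrho Heps [Hnd Hlen] Hl Hcov delta Hd.
  exists (proj F0). split; [|split].
  - intros f g z _ _ k _. unfold proj, Sadd, Sscale. cbv beta.
    destruct (in_dec idx_eq_dec k F0); [reflexivity|].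
    destruct z; unfold Cadd, Cmul, C0; simpl; f_equal; ring.
  - exists (map unitv F0). split; [rewrite length_map; lia|split].
    + apply Forall_forall; intros v Hv; apply in_map_iff in Hv.
      destruct Hv as [k0 [<- _]]. exists 1. intros F [HF _].
      apply Rle_trans with (fsum (k0 :: nil) (fun k => rho_L2 k * Cnorm2 (unitv k0 k))).
      * apply fsum_sub; auto.
        -- constructor; [simpl; tauto|constructor].
        -- intros k. unfold rho_L2. rewrite Rmult_1_l. apply Cnorm2_nonneg.
        -- intros k Hk. unfold unitv. destruct (idx_eq_dec k k0) as [->|].
           ++ exfalso; apply Hk; simpl; auto.
           ++ unfold Cnorm2, C0; simpl; ring.
      * simpl. unfold unitv. destruct (idx_eq_dec k0 k0); [|congruence].
        unfold rho_L2, Cnorm2; simpl; lra.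
    + intros f _. exists (map f F0). split; [rewrite !length_map; auto|].
      intros k _. symmetry. apply lincomb_unit; auto.
  - intros f M HM F HF. specialize (HM F HF).
    assert (Hc : 0 <= (eps + delta) ^ 2) by apply pow2_ge_0.
    apply Rle_trans with (fsum F (fun k => (eps + delta) ^ 2 * (rho k * Cnorm2 (f k)))).
    + apply fsum_le. intros k Hk. destruct HF as [_ HFl]. rewrite Forall_forall in HFl.
      specialize (HFl k Hk). unfold rho_L2, Ssub, proj.
      pose proof (Cnorm2_nonneg (f k)) as HN. pose proof (Hrho k) as Hr.
      destruct (in_dec idx_eq_dec k F0) as [Hi|Hni].
      * replace (Cnorm2 (Csub (f k) (f k))) with 0
          by (destruct (f k); unfold Csub, Cnorm2; simpl; ring).
        rewrite Rmult_0_r. apply Rmult_le_pos; auto. apply Rmult_le_pos; lra.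
      * replace (Cnorm2 (Csub (f k) C0)) with (Cnorm2 (f k))
          by (destruct (f k); unfold Csub, Cnorm2, C0; simpl; ring).
        assert (Hge : / eps ^ 2 <= rho k).
        { apply Rnot_lt_le. intro Hlt. apply Hni. apply Hcov; auto. }
        assert (He2 : 0 < eps ^ 2) by (apply pow_lt; auto).
        assert (1 <= eps ^ 2 * rho k).
        { apply (Rmult_le_compat_l (eps ^ 2)) in Hge; [|lra]. rewrite Rinv_r in Hge; lra. }
        assert (eps ^ 2 <= (eps + delta) ^ 2) by (simpl; nra).
        assert (1 <= (eps + delta) ^ 2 * rho k) by nra.
        nra.
    + rewrite fsum_scal. apply Rmult_le_compat_l; auto.
Qed.

Lemma char d rho eps n : (forall k, 0 < rho k) -> 0 < eps ->
  (approx_num_le d rho (S n) eps <->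
   exists F0, finset d F0 /\ (length F0 <= n)%nat /\
     forall k, length k = d -> rho k < / eps ^ 2 -> In k F0).
Proof.
  intros Hrho Heps. split.
  - intros Happ. apply NNPP. intros Hno.
    assert (Hb : forall m, (m <= S n)%nat -> exists K, NoDup K /\
              (forall k, In k K -> length k = d /\ rho k < / eps ^ 2) /\ length K = m).
    { induction m as [|m IH]; intros Hm.
      - exists nil. split; [constructor|split; [intros k []|reflexivity]].
      - destruct (IH ltac:(lia)) as [K [HK1 [HK2 HK3]]].
        assert (Hex : exists k, length k = d /\ rho k < / eps ^ 2 /\ ~ In k K).
        { apply NNPP. intros Hc. apply Hno. exists K. split.
          - split; [auto| apply Forall_forall; intros; apply HK2; auto].
          - split; [unfold Idx in *; lia|]. intros k Hk1 Hk2. apply NNPP. intros Hk3. apply Hc. exists k; auto. }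
        destruct Hex as [k [Hk1 [Hk2 Hk3]]]. exists (k :: K). split; [constructor; auto|split].
        + intros k' [<-|Hk']; auto.
        + simpl; lia. }
    destruct (Hb (S n) (le_n _)) as [K [HK1 [HK2 HK3]]].
    exact (lower d rho eps n K Hrho Heps HK1 HK2 HK3 Happ).
  - intros [F0 [HF [Hl Hc]]]. eapply upper; eauto.
Qed.

Lemma transfer d rho1 rho2 e1 e2 : (forall k, 0 < rho1 k) -> (forall k, 0 < rho2 k) ->
  0 < e1 -> 0 < e2 ->
  (forall k, rho1 k < / e1 ^ 2 <-> rho2 k < / e2 ^ 2) ->
  forall m, is_ncomp d rho1 e1 m <-> is_ncomp d rho2 e2 m.
Proof.
  intros H1 H2 He1 He2 Hs.
  assert (Ha : forall n, approx_num_le d rho1 (S n) e1 <-> approx_num_le d rho2 (S n) e2).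
  { intros n. rewrite (char d rho1 e1 n H1 He1), (char d rho2 e2 n H2 He2).
    split; intros [F0 [HF [Hl Hc]]]; exists F0; split; auto; split; auto;
      intros k Hk Hr; apply Hc; auto; apply Hs; auto. }
  intros m. unfold is_ncomp. split; intros [Hm Hmin]; split.
  - apply Ha; auto.
  - intros n Hn. apply Hmin. apply Ha; auto.
  - apply Ha; auto.
  - intros n Hn. apply Hmin. apply Ha; auto.
Qed.
Lemma rpow_nonneg x y : 0 <= rpow x y.
Proof. unfold rpow. destruct (Req_EM_T x 0); [lra|]. unfold Rpower. left; apply exp_pos. Qed.

Lemma wsum_nonneg (a b : nat -> R) : (forall j, (1 <= j)%nat -> 0 < a j) ->
  forall k j, (1 <= j)%nat -> 0 <= wsum a b j k.
Proof. intros Ha k. induction k as [|kj k IH]; intros j Hj; simpl; [lra|].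
  assert (0 < a j) by auto. pose proof (rpow_nonneg (IZR (Z.abs kj)) (2 * b j)).
  assert (0 <= wsum a b (S j) k) by (apply IH; lia). nra. Qed.

Lemma rhoH_eq omega a b k : 0 < omega ->
  rho_H omega a b k = exp (weight a b k * ln (/ omega)).
Proof. intros. unfold rho_H, omega_k, Rpower. rewrite ln_Rinv by auto.
  rewrite <- exp_Ropp. f_equal. ring. Qed.

Lemma inv_gt1 x : 0 < x < 1 -> 1 < / x.
Proof. intros H. apply (Rmult_lt_reg_l x); [lra|]. rewrite Rinv_r; lra. Qed.

Theorem theorem2p7 :
  forall (a b : nat -> R) (omega : R),
    (forall j, (1 <= j)%nat -> 0 < a j) ->
    (forall j, (1 <= j)%nat -> a j <= a (S j)) ->
    (forall j, (1 <= j)%nat -> 0 < b j) ->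
    (exists beta, 0 < beta /\ forall j, (1 <= j)%nat -> beta <= b j) ->
    0 < omega < 1 ->
    forall (eps : R) (d : nat), 0 < eps < 1 -> (1 <= d)%nat ->
      (forall m : nat,
         is_ncomp d (rho_H omega a b) eps m <->
         is_ncomp d (rho_W a b)
           (/ sqrt (ln (/ eps ^ 2) / ln (/ omega) + 1)) m) /\
      (forall m : nat,
         is_ncomp d (rho_W a b) eps m <->
         is_ncomp d (rho_H omega a b)
           (Rpower omega ((/ eps ^ 2 - 1) / 2)) m).
Proof.
  intros a b omega Ha _ _ _ Hom eps d Heps _.
  assert (HW : forall k, 0 < rho_W a b k).
  { intros k. unfold rho_W, weight. pose proof (wsum_nonneg a b Ha k 1 (le_n _)). lra. }
  assert (HH : forall k, 0 < rho_H omega a b k).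
  { intros k. rewrite rhoH_eq by lra. apply exp_pos. }
  assert (Hl : 0 < ln (/ omega)).
  { rewrite <- ln_1. apply ln_increasing; [lra|]. apply inv_gt1; lra. }
  assert (He2 : 0 < eps ^ 2 < 1) by (split; simpl; nra).
  assert (Hie : 1 < / eps ^ 2) by (apply inv_gt1; lra).
  assert (HE : 0 < ln (/ eps ^ 2)).
  { rewrite <- ln_1. apply ln_increasing; lra. }
  set (l := ln (/ omega)) in *.
  set (E := ln (/ eps ^ 2)) in *.
  split.
  - assert (HL : 0 < E / l) by (apply Rdiv_lt_0_compat; lra).
    assert (Hs : 0 < sqrt (E / l + 1)) by (apply sqrt_lt_R0; lra).
    apply transfer; [exact HH|exact HW|lra|apply Rinv_0_lt_compat; exact Hs|].
    intros k. rewrite rhoH_eq by lra. fold l.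
      assert (Hi : / (/ sqrt (E / l + 1)) ^ 2 = E / l + 1).
      { rewrite <- (pow2_sqrt (E / l + 1)) at 2 by lra. field. lra. }
      rewrite Hi. unfold rho_W.
      rewrite <- (exp_ln (/ eps ^ 2)) by lra. fold E.
      assert (El : E / l * l = E) by (field; lra).
      split; intros H.
      * apply exp_lt_inv in H. nra.
      * apply exp_increasing. nra.
  - set (c := / eps ^ 2 - 1).
    apply transfer; [exact HW|exact HH|lra|unfold Rpower; apply exp_pos|].
    intros k. rewrite rhoH_eq by lra. fold l.
      assert (Hi : / (Rpower omega (c / 2)) ^ 2 = exp (c * l)).
      { unfold Rpower. simpl. rewrite Rmult_1_r, <- exp_plus, <- exp_Ropp. f_equal.
        unfold l. rewrite ln_Rinv by lra. field. }
      rewrite Hi. unfold rho_W.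
      split; intros H.
      * apply exp_increasing. unfold c. nra.
      * apply exp_lt_inv in H. unfold c in H. nra.
Qed.
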